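(* If a spherical curve $P$ has a trigon of type B, then $r(P)\le 3$.
   Context: A spherical curve is a smooth immersion $P:S^1\to S^2$ whose self-intersections are finitely many transverse double points, called crossings. It is oriented and has at least one crossing. Regions are the components of $S^2\setminus P(S^1)$, and edges are the arcs of the curve between consecutive crossings. A trigon is a region bounded by three edges. The Gauss word is the cyclic word of crossings met in one traversal of the curve; each crossing appears twice. Crossings $a,b$ are interlaced if their occurrences alternate $a\dots b\dots a\dots b$ in the cyclic word, i.e., their chords cross in the chord diagram. Let a trigon have crossings $x,y,z$. Each of its three edges gives a block of two consecutive letters in the Gauss word, one block on each of $\{x,y\}$, $\{y,z\}$, $\{z,x\}$, so the word has the form $B_1W_1B_2W_2B_3W_3$ with the $W_i$ free of $x,y,z$. The trigon's type is determined by how many of the three pairs among $x,y,z$ are interlaced: type A if exactly two pairs are interlaced; type B if exactly one; type C if all three (e.g. $xy\,W_1\,zx\,W_2\,yz\,W_3$, as in the trefoil curve); type D if none (e.g. $xy\,W_1\,yz\,W_2\,zx\,W_3$). A crossing is reducible if no crossing is interlaced with it; equivalently, only three distinct regions meet at it. $P$ is reducible if it has a reducible crossing. The inverse-half-twisted splice $I$ at a crossing $p$ takes the curve with cyclic Gauss word $p\,A\,p\,B$ to the curve with Gauss word $\overline{A}\,B$, where $\overline{A}$ is $A$ reversed. Geometrically, $p$ is smoothed in the unique way giving a single closed curve, and the result is re-oriented. The reductivity $r(P)$ is the minimal number of successive applications of $I$ needed to reach a reducible spherical curve; $r(P)=0$ if $P$ is reducible. *)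

(* Defs.v *)
From HB Require Import structures.
From mathcomp Require Import all_boot all_fingroup.
Unset Printing Implicit Defensive.

Definition gauss_word (w : seq nat) : Prop :=
  w != [::] /\ forall x, x \in w -> count_mem x w = 2.

(** Darts (half-edges) of the curve with Gauss word w.  Position i of the
    word is a passage through crossing [nth 0 w i]; edge e_i goes from
    position i to position i+1 (cyclically).  Dart (i, true) is the start of
    e_i at position i, dart (i, false) is the end of e_(i-1) at position i. *)
Definition dart (L : nat) : finType := ('I_L * bool)%type.

Definition crossing_of (w : seq nat) (d : dart (size w)) : nat := nth 0 w d.1.

Definition edge_inv (L : nat) (d : dart L) : dart L :=
  if d.2 then (ordS d.1, false) else (ord_pred d.1, true).

(** A rotation system making every crossing transverse: sigma permutes the
    four darts at each crossing cyclically, and two steps of the rotation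
    lead from one half of a strand to the other half of the same strand. *)
Definition transverse_rotation (w : seq nat) (sigma : {perm dart (size w)}) : Prop :=
  (forall d, crossing_of w (sigma d) = crossing_of w d) /\
  (forall d, sigma (sigma d) = (d.1, ~~ d.2)).

(** Face permutation; its orbits are the boundary walks of the regions. *)
Definition face_perm (w : seq nat) (sigma : {perm dart (size w)})
  (d : dart (size w)) : dart (size w) := sigma (edge_inv (size w) d).

Definition num_regions (w : seq nat) (sigma : {perm dart (size w)}) : nat :=
  fcard (face_perm w sigma) (predT : {pred dart (size w)}).

(** A spherical curve (up to homeomorphism of S^2): a Gauss word together
    with a transverse rotation system of genus 0, i.e. V - E + F = 2, where
    V = n, E = 2n, n = size w / 2. *)
Definition spherical_curve (w : seq nat) (sigma : {perm dart (size w)}) : Prop :=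
  gauss_word w /\ transverse_rotation w sigma /\
  num_regions w sigma = (size w %/ 2 + 2)%N.

Definition between (w : seq nat) (a : nat) : seq nat :=
  let r := drop (index a w).+1 w in take (index a r) r.

Definition interlaced (w : seq nat) (a b : nat) : bool :=
  (a != b) && odd (count_mem b (between w a)).

(** Trigon of type B: a region bounded by three edges with three distinct
    crossings x, y, z, exactly one pair of which is interlaced. *)
Definition has_trigon_B (w : seq nat) (sigma : {perm dart (size w)}) : Prop :=
  exists d : dart (size w),
    let phi := face_perm w sigma in
    let x := crossing_of w d in
    let y := crossing_of w (phi d) in
    let z := crossing_of w (phi (phi d)) in
    [/\ phi (phi (phi d)) = d, x != y, y != z, z != x &
        (interlaced w x y + interlaced w y z + interlaced w z x)%N = 1%N].

Definition reducible_crossing (w : seq nat) (p : nat) : Prop :=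
  p \in w /\ forall q, ~~ interlaced w p q.

Definition reducible (w : seq nat) : Prop := exists p, reducible_crossing w p.

(** Inverse-half-twisted splice at p:  p A p B  |->  rev A ++ B
    (w is read cyclically starting at the first occurrence of p). *)
Definition splice (w : seq nat) (p : nat) : seq nat :=
  let r := drop (index p w).+1 w ++ take (index p w) w in
  rev (take (index p r) r) ++ drop (index p r).+1 r.

(** [reductivity_le w k] : r(P) <= k, i.e. some sequence of at most k
    successive splices at crossings reaches a reducible curve. *)
Fixpoint reductivity_le (w : seq nat) (k : nat) : Prop :=
  reducible w \/
  match k with
  | 0 => False
  | k'.+1 => exists p, p \in w /\ reductivity_le (splice w p) k'
  end.

(* Main.v *)
Require Import Defs.
From mathcomp Require Import all_boot all_fingroup.
From mathcomp Require Import zify.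

Fixpoint Np (q r : nat) (s : seq nat) : nat :=
  if s is x :: s' then (x == q) * count_mem r s' + Np q r s' else 0.

Lemma Np_cat (q r : nat) (s t : seq nat) :
  Np q r (s ++ t) = Np q r s + Np q r t + count_mem q s * count_mem r t.
Proof.
elim: s => [|x s IH] /=; first by rewrite add0n addn0.
rewrite IH count_cat; case: (x == q) => /=; nia.
Qed.

Lemma Np_notin (q r : nat) (s : seq nat) : q \notin s -> Np q r s = 0.
Proof.
elim: s => [|x s IH] //=; rewrite in_cons negb_or => /andP [hx hs].
by rewrite IH // eq_sym (negbTE hx).
Qed.

Lemma Np_rev (q r : nat) (s : seq nat) : q != r ->
  Np q r (rev s) + Np q r s = count_mem q s * count_mem r s.
Proof.
move=> qr; elim: s => [|x s IH] //=.
rewrite rev_cons -cats1 Np_cat /= count_rev.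
case xq: (x == q); case xr: (x == r) => /=; try nia.
all: rewrite ?mul1n ?mul0n ?add0n ?addn0 ?muln0 ?mulnDl ?mulnDr ?mul1n ?muln1 -IH; lia. Qed.

Lemma Np_sym (q r : nat) (s : seq nat) : q != r ->
  Np q r s + Np r q s = count_mem q s * count_mem r s.
Proof.
move=> qr; elim: s => [|x s IH] //=.
case xq: (x == q); case xr: (x == r) => /=; try nia.
all: move: IH; rewrite ?mul1n ?mul0n ?add0n ?addn0 ?muln0 ?mulnDl ?mulnDr ?mul1n ?muln1 ?mul0n ?add0n.
- by move=> IH; rewrite -addnA IH.
- by move=> IH; rewrite addnCA IH.
- by [].
Qed.

Lemma first_split (a : nat) (w : seq nat) : a \in w ->
  w = take (index a w) w ++ a :: drop (index a w).+1 w /\ a \notin take (index a w) w.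
Proof.
move=> aw; split; last by rewrite in_take // ltnn.
by rewrite -{1}(cat_take_drop (index a w) w) (drop_nth 0) ?index_mem // nth_index.
Qed.

Lemma decomp (a : nat) (w : seq nat) : count_mem a w = 2 ->
  exists s1 s2 s3, w = s1 ++ a :: s2 ++ a :: s3 /\
    a \notin s1 /\ a \notin s2 /\ a \notin s3.
Proof.
move=> c2.
have aw : a \in w by apply: contraT => /count_memPn; rewrite c2.
have [e1 n1] := first_split _ _ aw.
move: (take _ w) (drop _ w) e1 n1 => s1 t e1 n1.
have ct : count_mem a t = 1.
  move: c2; rewrite e1 count_cat /= eqxx (count_memPn n1) /=; lia.
have at' : a \in t by apply: contraT => /count_memPn; rewrite ct.
have [e2 n2] := first_split _ _ at'.
move: (take _ t) (drop _ t) e2 n2 => s2 s3 e2 n2.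
exists s1, s2, s3; split; first by rewrite e1 e2.
do 2 split => //; apply/count_memPn.
move: ct; rewrite e2 count_cat /= eqxx (count_memPn n2) /=; lia.
Qed.

Lemma index_dec (a : nat) (s t : seq nat) : a \notin s -> index a (s ++ a :: t) = size s.
Proof. by move=> h; rewrite index_cat (negbTE h) /= eqxx addn0. Qed.

Lemma dropS_cat (s t : seq nat) (x : nat) : drop (size s).+1 (s ++ x :: t) = t.
Proof. by elim: s => [|y s IH] /=; rewrite ?drop0. Qed.

Lemma between_dec (a : nat) (s1 s2 s3 : seq nat) : a \notin s1 -> a \notin s2 ->
  between (s1 ++ a :: s2 ++ a :: s3) a = s2.
Proof.
move=> h1 h2; rewrite /between index_dec //.
rewrite dropS_cat index_dec //.
by rewrite take_size_cat.
Qed.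

Lemma splice_dec (p : nat) (s1 s2 s3 : seq nat) : p \notin s1 -> p \notin s2 ->
  splice (s1 ++ p :: s2 ++ p :: s3) p = rev s2 ++ s3 ++ s1.
Proof.
move=> h1 h2; rewrite /splice index_dec //.
rewrite dropS_cat (take_size_cat _ (erefl (size s1))).
rewrite -catA /= index_dec // (take_size_cat _ (erefl (size s2))).
by rewrite dropS_cat.
Qed.

Lemma interl_Np (w : seq nat) (q r : nat) : q != r -> count_mem q w = 2 ->
  interlaced w q r = odd (Np q r w).
Proof.
move=> qr /decomp [s1 [s2 [s3 [-> [h1 [h2 h3]]]]]].
rewrite /interlaced between_dec // qr /=.
rewrite !Np_cat /= Np_cat /= (Np_notin _ _ _ h1) (Np_notin _ _ _ h2) (Np_notin _ _ _ h3).
rewrite (count_memPn h1) (count_memPn h2) eqxx !count_cat /= (negbTE qr) /=.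
rewrite !oddD !oddM /=; by case: (odd _); case: (odd _).
Qed.

Definition G (w : seq nat) := forall x, x \in w -> count_mem x w = 2.

Lemma interlC (w : seq nat) (q r : nat) : count_mem q w = 2 -> count_mem r w = 2 ->
  interlaced w q r = interlaced w r q.
Proof.
move=> cq cr; case: (eqVneq q r) => [->|qr] //.
rewrite !interl_Np // 1?eq_sym //.
have := congr1 odd (Np_sym q r w qr); rewrite cq cr oddD /=.
by case: (odd _); case: (odd _).
Qed.

Lemma interl_notin (w : seq nat) (a q : nat) : q \notin w -> interlaced w a q = false.
Proof.
move=> h; rewrite /interlaced (_ : count_mem q _ = 0) ?andbF //.
by apply/count_memPn; apply: contra h => /mem_take /mem_drop.
Qed.

Lemma interl_self (w : seq nat) (a : nat) : interlaced w a a = false.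
Proof. by rewrite /interlaced eqxx. Qed.

Lemma count_splice (w : seq nat) (p q : nat) : count_mem p w = 2 ->
  count_mem q (splice w p) = if q == p then 0 else count_mem q w.
Proof.
move=> /decomp [s1 [s2 [s3 [-> [h1 [h2 h3]]]]]].
rewrite splice_dec // !count_cat /= count_rev.
case: (eqVneq q p) => [->|qp].
  by rewrite (count_memPn h1) (count_memPn h2) (count_memPn h3).
rewrite count_cat /= eq_sym (negbTE qp) /=; lia.
Qed.

Lemma memc (x : nat) (s : seq nat) : (x \in s) = (0 < count_mem x s).
Proof. by rewrite -has_pred1 has_count. Qed.

Lemma G_splice (w : seq nat) (p : nat) : G w -> p \in w -> G (splice w p).
Proof.
move=> Gw pw x xs; have := count_splice w p x (Gw p pw).
move: xs; rewrite memc.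
case: (eqVneq x p) => [exp|xp] xs e; first by rewrite e in xs.
by rewrite e Gw // memc -e.
Qed.

Lemma mem_splice (w : seq nat) (p q : nat) : count_mem p w = 2 ->
  (q \in splice w p) = (q != p) && (q \in w).
Proof.
move=> cp; have := count_splice w p q cp.
by case: (eqVneq q p) => [_|qp] e /=; rewrite memc e // -memc.
Qed.

Lemma interl_splice (w : seq nat) (p q r : nat) : count_mem p w = 2 ->
  count_mem q w = 2 -> count_mem r w = 2 -> q != p -> r != p -> q != r ->
  interlaced (splice w p) q r =
  interlaced w q r (+) (interlaced w p q && interlaced w p r).
Proof.
move=> cp cq cr qp rp qr.
have cq' := count_splice w p q cp; rewrite (negbTE qp) cq in cq'.
rewrite (interl_Np _ _ _ qr cq') (interl_Np _ _ _ qr cq).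
move: cq cr; case/decomp: cp => [s1 [s2 [s3 [-> [h1 [h2 h3]]]]]] cq cr.
rewrite splice_dec // /interlaced !between_dec // eq_sym qp eq_sym rp /=.
rewrite !Np_cat /= Np_cat /= !count_cat /= (eq_sym p q) (eq_sym p r) (negbTE qp) (negbTE rp) /= count_rev.
have Nr := congr1 odd (Np_rev q r s2 qr).
move: cq cr; rewrite !count_cat /= (eq_sym p q) (eq_sym p r) (negbTE qp) (negbTE rp) /=.
move=> /(congr1 odd) cq /(congr1 odd) cr.
do 3 rewrite ?count_cat ?oddD ?oddM ?add0n /= in cq cr Nr *.
rewrite (eq_sym p q) (negbTE qp) in cq; rewrite (eq_sym p r) (negbTE rp) in cr.
move: cq cr Nr.
move: (odd (count_mem q s1)) (odd (count_mem q s2)) (odd (count_mem q s3)).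
move: (odd (count_mem r s1)) (odd (count_mem r s2)) (odd (count_mem r s3)).
move: (odd (Np q r s1)) (odd (Np q r s2)) (odd (Np q r s3)) (odd (Np q r (rev s2))).
by do 10! case.
Qed.

Lemma core (w : seq nat) (a b c : nat) : G w -> a \in w -> b \in w -> c \in w ->
  a != b -> b != c -> a != c ->
  interlaced w a b -> ~~ interlaced w a c -> ~~ interlaced w b c ->
  (forall u, u \in w -> u != a -> u != b -> u != c ->
     interlaced w c u = interlaced w a u (+) interlaced w b u) ->
  reductivity_le w 3.
Proof.
move=> Gw aw bw cw ab bc ac Iab Iac Ibc X.
have Isym : forall x y, x \in w -> y \in w -> interlaced w x y = interlaced w y x.
  by move=> x y xw yw; apply: interlC; apply: Gw.
case: (boolP (has (interlaced w c) w)) => [/hasP [u uw Icu] | /hasPn H].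
- have uc : u != c by apply: contraTneq Icu => ->; rewrite interl_self.
  have ua : u != a by apply: contraTneq Icu => ->; rewrite Isym // (negbTE Iac).
  have ub : u != b by apply: contraTneq Icu => ->; rewrite Isym // (negbTE Ibc).
  set w1 := splice w a.
  have G1 : G w1 by apply: G_splice.
  have m1 : forall x, (x \in w1) = (x != a) && (x \in w) by move=> x; apply: mem_splice; apply: Gw.
  have uw1 : u \in w1 by rewrite m1 ua.
  set w2 := splice w1 u.
  have G2 : G w2 by apply: G_splice.
  have m2 : forall x, (x \in w2) = (x != u) && (x \in w1) by move=> x; apply: mem_splice; apply: G1.
  have bw2 : b \in w2 by rewrite m2 m1 eq_sym ub eq_sym ab.
  set w3 := splice w2 b.
  have m3 : forall x, (x \in w3) = (x != b) && (x \in w2) by move=> x; apply: mem_splice; apply: G2.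
  have cw3 : c \in w3 by rewrite m3 m2 m1 eq_sym bc eq_sym uc eq_sym ac.
  right; exists a; split => //; right; exists u; split => //; right; exists b; split => //.
  left; exists c; split => // q.
  case: (boolP (q \in w3)) => [qw3|]; last by move=> h; rewrite interl_notin.
  case: (eqVneq q c) => [->|qc]; first by rewrite interl_self.
  move: qw3; rewrite m3 m2 m1 => /and4P [qb qu qa qw].
  have c1 : forall x, x \in w -> x != a -> count_mem x w1 = 2 by move=> x xw xa; apply: G1; rewrite m1 xa.
  have c2 : forall x, x \in w -> x != a -> x != u -> count_mem x w2 = 2.
    by move=> x xw xa xu; apply: G2; rewrite m2 m1 xa xu.
  have ca : forall x, x \in w -> count_mem x w = 2 by [].
  have ba : b != a by rewrite eq_sym.
  have ca' : c != a by rewrite eq_sym.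
  have cb : c != b by rewrite eq_sym.
  have cu : c != u by rewrite eq_sym.
  have bu : b != u by rewrite eq_sym.
  have cq : c != q by rewrite eq_sym.
  have bq : b != q by rewrite eq_sym.
  have uq : u != q by rewrite eq_sym.
  rewrite (interl_splice _ _ _ _ (c2 b bw ba bu) (c2 c cw ca' cu) (c2 q qw qa qu) cb qb cq).
  rewrite (interl_splice _ _ _ _ (c1 u uw ua) (c1 c cw ca') (c1 q qw qa) cu qu cq).
  rewrite (interl_splice _ _ _ _ (c1 u uw ua) (c1 b bw ba) (c1 c cw ca') bu cu bc).
  rewrite (interl_splice _ _ _ _ (c1 u uw ua) (c1 b bw ba) (c1 q qw qa) bu qu bq).
  have cw' := ca _ aw.
  rewrite !(interl_splice _ _ _ _ (ca _ aw) (ca _ cw) (ca _ qw) ca' qa cq).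
  rewrite !(interl_splice _ _ _ _ (ca _ aw) (ca _ uw) (ca _ cw) ua ca' uc).
  rewrite !(interl_splice _ _ _ _ (ca _ aw) (ca _ uw) (ca _ qw) ua qa uq).
  rewrite !(interl_splice _ _ _ _ (ca _ aw) (ca _ bw) (ca _ cw) ba ca' bc).
  rewrite !(interl_splice _ _ _ _ (ca _ aw) (ca _ uw) (ca _ bw) ua ba ub).
  rewrite !(interl_splice _ _ _ _ (ca _ aw) (ca _ bw) (ca _ qw) ba qa bq).
  rewrite (Isym u c) // (Isym u b) // (negbTE Iac) (negbTE Ibc) Iab Icu.
  have Xu := X u uw ua ub uc; rewrite Icu in Xu.
  rewrite (X q qw qa qb qc).
  move: Xu; move: (interlaced w a u) (interlaced w b u) (interlaced w a q) (interlaced w b q) (interlaced w u q).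
  by do 5! case.
- left; exists c; split => // q.
  case: (boolP (q \in w)) => [qw|qw]; last by rewrite interl_notin.
  by rewrite H.
Qed.

Lemma sigma_other (w : seq nat) (sigma : {perm dart (size w)}) :
  transverse_rotation w sigma -> forall e, (sigma e).1 != e.1.
Proof.
move=> [_ ssq] [i b]; apply/eqP => /= h.
have h2 := ssq (i, b).
have [c Ec] : exists c, sigma (i, b) = (i, c).
  by case: (sigma (i, b)) h => j c /= ->; exists c.
rewrite Ec /= in h2.
have nb : forall x : bool, x != ~~ x by case.
case: (eqVneq c b) => [cb|cb].
- rewrite cb in Ec h2; rewrite Ec in h2; case: h2 => /eqP; by rewrite (negbTE (nb b)).
- have cb' : c = ~~ b by move: cb; case: (c); case: (b).
  rewrite cb' in Ec h2; rewrite -h2 in Ec; have := perm_inj Ec => -[] /eqP.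
  by rewrite (negbTE (nb b)).
Qed.

Lemma nth_occ (a : nat) (s1 s2 s3 : seq nat) (i : nat) :
  a \notin s1 -> a \notin s2 -> a \notin s3 ->
  i < size (s1 ++ a :: s2 ++ a :: s3) -> nth 0 (s1 ++ a :: s2 ++ a :: s3) i = a ->
  i = size s1 \/ i = size s1 + (size s2).+1.
Proof.
move=> h1 h2 h3; rewrite size_cat /= size_cat /= nth_cat.
case: (ltnP i (size s1)) => [lt1 _ e|ge1 lti].
  by move: h1; rewrite -e mem_nth.
case E: (i - size s1) => [|k] /=; first by left; lia.
rewrite nth_cat; case: (ltnP k (size s2)) => [lt2 e|ge2].
  by move: h2; rewrite -e mem_nth.
case E2: (k - size s2) => [|k2] /=; first by right; lia.
move=> e; move: h3; rewrite -e mem_nth //.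
move: lti E E2; move: (size s1) (size s2) (size s3) => n1 n2 n3; lia.
Qed.

Lemma pc_pos (w : seq nat) (a u i j : nat) : count_mem a w = 2 -> a != u ->
  i != j -> i < size w -> j < size w -> nth 0 w i = a -> nth 0 w j = a ->
  interlaced w a u = odd (count_mem u (take i w)) (+) odd (count_mem u (take j w)).
Proof.
move=> /decomp [s1 [s2 [s3 [-> [h1 [h2 h3]]]]]] au ij ilt jlt ei ej.
have T1 : take (size s1) (s1 ++ a :: s2 ++ a :: s3) = s1 by rewrite take_size_cat.
have T2 : take (size s1 + (size s2).+1) (s1 ++ a :: s2 ++ a :: s3) = s1 ++ a :: s2.
  by rewrite (catA s1 (a :: s2)) take_size_cat // size_cat.
have V : odd (count_mem u s1) (+) odd (count_mem u (s1 ++ a :: s2)) = odd (count_mem u s2).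
  rewrite count_cat /= (negbTE au) add0n oddD; by case: (odd _); case: (odd _).
rewrite /interlaced between_dec // au /=.
case: (nth_occ _ _ _ _ _ h1 h2 h3 ilt ei) => Ei; case: (nth_occ _ _ _ _ _ h1 h2 h3 jlt ej) => Ej;
  rewrite Ei Ej ?eqxx // in ij *; rewrite ?T1 ?T2 -V // addbC //.
Qed.

Lemma adjS (w : seq nat) (u : nat) (m : 'I_(size w)) : count_mem u w = 2 ->
  nth 0 w m != u ->
  odd (count_mem u (take m w)) = odd (count_mem u (take (ordS m) w)).
Proof.
move=> cu hm; rewrite /ordS /=.
have lt := ltn_ord m.
have tn := take_nth 0 lt.
have [lt2|Heq] : m.+1 < size w \/ m.+1 = size w by move: lt; clear; lia.
- by rewrite modn_small // tn -cats1 count_cat /= (negbTE hm) /= !addn0.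
- rewrite Heq modnn take0 /=.
  rewrite Heq take_size in tn.
  have := congr1 (count_mem u) tn; rewrite -cats1 count_cat /= (negbTE hm) /= !addn0 cu.
  by move=> <-.
Qed.

Lemma adj (w : seq nat) (u : nat) (e : dart (size w)) : count_mem u w = 2 ->
  nth 0 w e.1 != u -> nth 0 w (edge_inv (size w) e).1 != u ->
  odd (count_mem u (take e.1 w)) = odd (count_mem u (take (edge_inv (size w) e).1 w)).
Proof.
move=> cu; case: e => m [] /= h1 h2.
- exact: adjS.
- rewrite -{1}(ord_predK m) -adjS //.
Qed.

Theorem mainTheorem5 (w : seq nat) (sigma : {perm dart (size w)}) :
  spherical_curve w sigma -> has_trigon_B w sigma -> reductivity_le w 3.
Proof.
move=> [[_ Gw] [TR _]] [d /= [h3 hxy hyz hzx hsum]].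
have [scr ssq] := TR.
have so := sigma_other _ _ TR.
rewrite /face_perm in h3 hxy hyz hzx hsum.
set e0 := edge_inv (size w) d in h3 hxy hyz hzx hsum.
set d1 := sigma e0 in h3 hxy hyz hzx hsum.
set e1 := edge_inv (size w) d1 in h3 hxy hyz hzx hsum.
set d2 := sigma e1 in h3 hxy hyz hzx hsum.
set e2 := edge_inv (size w) d2 in h3.
set x := crossing_of w d in hxy hzx hsum.
set y := crossing_of w d1 in hxy hyz hsum.
set z := crossing_of w d2 in hyz hzx hsum.
have ex0 : nth 0 w d.1 = x by [].
have ex2 : nth 0 w e2.1 = x by rewrite -[x]/(crossing_of w d) -h3 scr.
have ey0 : nth 0 w e0.1 = y by rewrite -[y]/(crossing_of w d1) scr.
have ey1 : nth 0 w d1.1 = y by [].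
have ez0 : nth 0 w e1.1 = z by rewrite -[z]/(crossing_of w d2) scr.
have ez1 : nth 0 w d2.1 = z by [].
have dx : d.1 != e2.1 :> nat by rewrite -h3; apply: so.
have dy : d1.1 != e0.1 :> nat by apply: so.
have dz : d2.1 != e1.1 :> nat by apply: so.
have xw : x \in w by rewrite -ex0 mem_nth.
have yw : y \in w by rewrite -ey1 mem_nth.
have zw : z \in w by rewrite -ez1 mem_nth.
have T : forall u, u \in w -> u != x -> u != y -> u != z ->
    interlaced w x u (+) interlaced w y u (+) interlaced w z u = false.
  move=> u uw ux uy uz; have cu := Gw u uw.
  rewrite (pc_pos _ _ u _ _ (Gw x xw) _ dx (ltn_ord _) (ltn_ord _) ex0 ex2); last by rewrite eq_sym.
  rewrite (pc_pos _ _ u _ _ (Gw y yw) _ dy (ltn_ord _) (ltn_ord _) ey1 ey0); last by rewrite eq_sym.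
  rewrite (pc_pos _ _ u _ _ (Gw z zw) _ dz (ltn_ord _) (ltn_ord _) ez1 ez0); last by rewrite eq_sym.
  rewrite (adj w u d cu) ?ex0 ?ey0 1?eq_sym //.
  rewrite (adj w u d1 cu) ?ey1 ?ez0 1?eq_sym //.
  rewrite (adj w u d2 cu) ?ez1 ?ex2 1?eq_sym //.
  by case: (odd _); case: (odd _); case: (odd _).
have Isym : forall a b, a \in w -> b \in w -> interlaced w a b = interlaced w b a.
  by move=> a b aw bw; apply: interlC; apply: Gw.
have yx : y != x by rewrite eq_sym.
have zy : z != y by rewrite eq_sym.
have xz : x != z by rewrite eq_sym.
move: hsum.
case Ixy: (interlaced w x y); case Iyz: (interlaced w y z); case Izx: (interlaced w z x) => // _.
- apply: (core w x y z) => //; try by rewrite ?Ixy ?Iyz ?Izx. all: try by rewrite Isym // ?Ixy ?Iyz ?Izx.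
  move=> u uw ua ub uc; have := T u uw.
  case: (eqVneq u x) => [e|ux]; first by move: ua ub uc; rewrite e eqxx /= => *.
  case: (eqVneq u y) => [e|uy]; first by move: ua ub uc; rewrite e eqxx /= => *.
  case: (eqVneq u z) => [e|uz]; first by move: ua ub uc; rewrite e eqxx /= => *.
  move=> /(_ isT isT isT).
  by case: (interlaced w x u); case: (interlaced w y u); case: (interlaced w z u).
- apply: (core w y z x) => //; try by rewrite ?Ixy ?Iyz ?Izx. all: try by rewrite Isym // ?Ixy ?Iyz ?Izx.
  move=> u uw ua ub uc; have := T u uw.
  case: (eqVneq u x) => [e|ux]; first by move: ua ub uc; rewrite e eqxx /= => *.
  case: (eqVneq u y) => [e|uy]; first by move: ua ub uc; rewrite e eqxx /= => *.
  case: (eqVneq u z) => [e|uz]; first by move: ua ub uc; rewrite e eqxx /= => *.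
  move=> /(_ isT isT isT).
  by case: (interlaced w x u); case: (interlaced w y u); case: (interlaced w z u).
- apply: (core w z x y) => //; try by rewrite ?Ixy ?Iyz ?Izx. all: try by rewrite Isym // ?Ixy ?Iyz ?Izx.
  move=> u uw ua ub uc; have := T u uw.
  case: (eqVneq u x) => [e|ux]; first by move: ua ub uc; rewrite e eqxx /= => *.
  case: (eqVneq u y) => [e|uy]; first by move: ua ub uc; rewrite e eqxx /= => *.
  case: (eqVneq u z) => [e|uz]; first by move: ua ub uc; rewrite e eqxx /= => *.
  move=> /(_ isT isT isT).
  by case: (interlaced w x u); case: (interlaced w y u); case: (interlaced w z u).
Qed.
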